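(* Let $\mathcal H$ be a complex Hilbert space of finite dimension $n$ and let $U,V,W$ be unitary operators on $\mathcal H$. Then: (1) (Projective invariance) for every $c\in\mathbb C$ with $|c|=1$, $D(U,cV)=D(cU,V)=D(U,V)$; (2) $0\le D(U,V)\le 1$, and $D(U,V)=0$ if and only if $U=cV$ for some $c\in\mathbb C$ with $|c|=1$; (3) $D(U,V)=D(V,U)$; (4) (Triangle inequality) $D(U,W)\le D(U,V)+D(V,W)$; (5) (Invariance) for every unitary $X$ on $\mathcal H$, $D(XU,XV)=D(UX,VX)=D(U,V)$; (6) $D(U,V)=1$ if and only if there is a unit vector $\alpha\in\mathcal H$ such that $U\alpha$ and $V\alpha$ are orthogonal.
   Context: For unitary operators $U,V$ on a finite-dimensional complex Hilbert space $\mathcal H$ define the u-distance $D(U,V)=\max_{\|\psi\|=1}\big(1-|\langle\psi,U^\dagger V\psi\rangle|^2\big)^{1/2}=\big(1-\min_{\|\psi\|=1}|\langle\psi,U^\dagger V\psi\rangle|^2\big)^{1/2}$. *)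

(* Defs.v *)
From HB Require Import structures.
From mathcomp Require Import all_boot all_order all_algebra.
From mathcomp Require Import classical_sets reals.
From mathcomp Require Export complex.
Set Implicit Arguments. Unset Strict Implicit. Unset Printing Implicit Defensive.
Import Order.TTheory GRing.Theory Num.Theory.
Local Open Scope ring_scope.

Section UDist.
Variables (R : realType) (n : nat).
Local Notation C := R[i].

Definition inner (u v : 'cV[C]_n) : C := \sum_(k < n) (u k ord0)^* * v k ord0.

Definition adjmx (A : 'M[C]_n) : 'M[C]_n := (map_mx Num.conj A)^T.

Definition unitary (U : 'M[C]_n) : Prop := adjmx U *m U = 1%:M.

Definition uabs (U V : 'M[C]_n) (psi : 'cV[C]_n) : R :=
  ComplexField.Normc.normc (inner psi (adjmx U *m V *m psi)).

(* The u-distance: max over unit vectors of sqrt(1 - |<psi,U^dag V psi>|^2),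
   written as a supremum (attained by compactness). *)
Definition udist (U V : 'M[C]_n) : R :=
  sup [set r : R | exists psi : 'cV[C]_n,
         inner psi psi = 1 /\ r = Num.sqrt (1 - uabs U V psi ^+ 2)].
End UDist.

(* Main.v *)
Require Import Defs.
From HB Require Import structures.
From mathcomp Require Import all_boot all_order all_algebra.
From mathcomp Require Import boolp classical_sets reals complex.
From mathcomp Require Import ring lra.
From mathcomp Require Import topology normedtype derive.
Import Order.TTheory GRing.Theory Num.Theory.
Import numFieldNormedType.Exports.
Set Implicit Arguments. Unset Strict Implicit. Unset Printing Implicit Defensive.
Local Open Scope ring_scope.

Section Alg.
Variable R : realType.
Local Open Scope classical_set_scope.
Local Notation C := R[i].
Implicit Types (u v w x y z : 'cV[C]_1) .
End Alg.

Section Alg2.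
Variables (R : realType) (n : nat).
Local Open Scope classical_set_scope.
Local Notation C := R[i].
Implicit Types (u v w x y z : 'cV[C]_n) (A B : 'M[C]_n).

Lemma innerDr u v w : inner u (v + w) = inner u v + inner u w.
Proof. by rewrite /inner -big_split; apply: eq_bigr => k _; rewrite mxE mulrDr. Qed.
Lemma innerDl u v w : inner (u + v) w = inner u w + inner v w.
Proof. by rewrite /inner -big_split; apply: eq_bigr => k _; rewrite mxE rmorphD mulrDl. Qed.
Lemma innerZr a u v : inner u (a *: v) = a * inner u v.
Proof. by rewrite /inner mulr_sumr; apply: eq_bigr => k _; rewrite mxE mulrCA. Qed.
Lemma innerZl a u v : inner (a *: u) v = a^* * inner u v.
Proof. by rewrite /inner mulr_sumr; apply: eq_bigr => k _; rewrite mxE rmorphM mulrA. Qed.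
Lemma innerNr u v : inner u (- v) = - inner u v.
Proof. by rewrite -scaleN1r innerZr mulN1r. Qed.
Lemma innerNl u v : inner (- u) v = - inner u v.
Proof. by rewrite -scaleN1r innerZl rmorphN1 mulN1r. Qed.
Lemma innerBr u v w : inner u (v - w) = inner u v - inner u w.
Proof. by rewrite innerDr innerNr. Qed.
Lemma innerBl u v w : inner (u - v) w = inner u w - inner v w.
Proof. by rewrite innerDl innerNl. Qed.
Lemma inner_conj u v : (inner u v)^* = inner v u.
Proof. by rewrite /inner rmorph_sum; apply: eq_bigr => k _; rewrite rmorphM /= conjCK mulrC. Qed.
Lemma inner0r u : inner u 0 = 0.
Proof. by rewrite /inner big1 // => k _; rewrite mxE mulr0. Qed.
Lemma inner_adj u A v : inner u (A *m v) = inner (adjmx A *m u) v.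
Proof.
rewrite /inner /adjmx.
under eq_bigr do rewrite mxE mulr_sumr.
under [RHS]eq_bigr do rewrite mxE rmorph_sum mulr_suml.
rewrite exchange_big /=; apply: eq_bigr => i _; apply: eq_bigr => j _.
by rewrite !mxE rmorphM /= conjCK mulrCA mulrA.
Qed.
Lemma adjmxM A B : adjmx (A *m B) = adjmx B *m adjmx A.
Proof. by rewrite /adjmx map_mxM trmx_mul. Qed.
Lemma adjmxK A : adjmx (adjmx A) = A.
Proof. by apply/matrixP => i j; rewrite !mxE conjCK. Qed.
Lemma adjmxZ a A : adjmx (a *: A) = a^* *: adjmx A.
Proof. by apply/matrixP => i j; rewrite !mxE rmorphM. Qed.
Lemma adjmx1 : adjmx (1%:M : 'M[C]_n) = 1%:M.
Proof. by apply/matrixP => i j; rewrite !mxE rmorph_nat eq_sym. Qed.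
Lemma inner_self_ge0 u : 0 <= inner u u.
Proof. by apply: sumr_ge0 => k _; rewrite mulrC mul_conjC_ge0. Qed.
Lemma inner_self_eq0 u : inner u u = 0 -> u = 0.
Proof.
move=> /eqP; rewrite psumr_eq0 => [/allP H|k _]; last by rewrite mulrC mul_conjC_ge0.
apply/matrixP => i j; rewrite (ord1 j) mxE.
have /H/implyP/(_ isT) : i \in index_enum 'I_n by rewrite mem_index_enum.
by rewrite mulrC mul_conjC_eq0 => /eqP.
Qed.
End Alg2.


Section T.
Variable R : realType.
Local Open Scope classical_set_scope.
Local Notation C := R[i].
Lemma conjE (a b : R) : (Complex a b : C)^* = Complex a (- b).
Proof. by []. Qed.
Lemma normc_sqr (z : C) : z * z^* = ((ComplexField.Normc.normc z) ^+ 2)%:C%C.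
Proof.
case: z => a b; rewrite conjE /=. rewrite sqr_sqrtr ?addr_ge0 ?sqr_ge0 //.
apply/eqP; rewrite eq_complex /=; apply/andP; split; apply/eqP; ring.
Qed.
Lemma addJ (z : C) : z + z^* = (2 * complex.Re z)%:C%C.
Proof.
case: z => a b; rewrite conjE /=.
apply/eqP; rewrite eq_complex /=; apply/andP; split; apply/eqP; ring.
Qed.
Lemma normC_normc (z : C) : `|z| = (ComplexField.Normc.normc z)%:C%C.
Proof. by case: z => a b; rewrite normc_def. Qed.
Lemma Re_le_normc (z : C) : complex.Re z <= ComplexField.Normc.normc z.
Proof.
case: z => a b /=.
apply: le_trans (ler_norm a) _; rewrite -sqrtr_sqr; apply: ler_wsqrtr.
by rewrite lerDl sqr_ge0.
Qed.
Lemma normc_ge0 (z : C) : 0 <= ComplexField.Normc.normc z.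
Proof. by case: z => a b /=; exact: sqrtr_ge0. Qed.
Lemma normcJ' (z : C) : ComplexField.Normc.normc (z^*) = ComplexField.Normc.normc z.
Proof. by case: z => a b; rewrite conjE /= sqrrN. Qed.
Lemma normcM' (z w : C) : ComplexField.Normc.normc (z * w) = ComplexField.Normc.normc z * ComplexField.Normc.normc w.
Proof. exact: ComplexField.Normc.normcM. Qed.
End T.


Section D.
Variables (R : realType) (n : nat).
Local Open Scope classical_set_scope.
Local Notation C := R[i].
Local Notation nc := (@ComplexField.Normc.normc R).
Implicit Types (u v w x y z : 'cV[C]_n) (A B : 'M[C]_n).

Lemma inner_self_real u : (inner u u)^* = inner u u.
Proof. exact: inner_conj. Qed.

Lemma CS u v : `|inner u v| ^+ 2 <= inner u u * inner v v.
Proof.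
set p := inner v v; set q := inner v u.
have [v0|vn0] := eqVneq v 0.
  by rewrite /p v0 !inner0r normr0 expr0n /= mulr0.
have pP : 0 < p.
  rewrite lt_def inner_self_ge0 andbT; apply/eqP => /inner_self_eq0 H.
  by rewrite H eqxx in vn0.
have E : inner (p *: u - q *: v) (p *: u - q *: v) = p * (p * inner u u - q * q^*).
  rewrite innerBl !innerBr !innerZl !innerZr.
  rewrite -[inner u v]inner_conj -/q -/p [p^*]inner_self_real -/p.
  ring.
have := inner_self_ge0 (p *: u - q *: v); rewrite E pmulr_rge0 // subr_ge0.
by rewrite -[inner u v]inner_conj -/q norm_conjC normCK [inner u u * _]mulrC.
Qed.

Lemma ge0_real (z : C) : 0 <= z -> z = (complex.Re z)%:C%C.
Proof. by move=> /ger0_Im; case: z => a b /= ->. Qed.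

Lemma inner_selfR u : inner u u = (complex.Re (inner u u))%:C%C.
Proof. exact/ge0_real/inner_self_ge0. Qed.

Lemma Nr_ge0 u : 0 <= complex.Re (inner u u).
Proof. by rewrite -ler0c -inner_selfR inner_self_ge0. Qed.

Lemma CSr u v : nc (inner u v) ^+ 2 <= complex.Re (inner u u) * complex.Re (inner v v).
Proof.
have := CS u v; rewrite normC_normc [inner u u]inner_selfR [inner v v]inner_selfR.
by rewrite -rmorphXn -rmorphM lecR.
Qed.
End D.


Section E.
Variables (R : realType) (n : nat).
Local Open Scope classical_set_scope.
Local Notation C := R[i].
Local Notation nc := (@ComplexField.Normc.normc R).
Implicit Types (u v w x y z : 'cV[C]_n) (A B : 'M[C]_n).

Lemma ReC (r : R) : complex.Re (r%:C%C) = r. Proof. by []. Qed.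
Lemma realCM (r s : R) : (r * s)%:C%C = r%:C%C * s%:C%C :> C.
Proof. exact: rmorphM. Qed.

Lemma sqrt_tri x y z : inner x x = 1 -> inner y y = 1 -> inner z z = 1 ->
  Num.sqrt (1 - nc (inner x z) ^+ 2) <=
  Num.sqrt (1 - nc (inner x y) ^+ 2) + Num.sqrt (1 - nc (inner y z) ^+ 2).
Proof.
move=> xx yy zz.
rewrite -[inner x y]inner_conj -[inner y z]inner_conj -[inner x z]inner_conj !normcJ'.
set mu := inner y x; set nu := inner z y; set ka := inner z x.
set e1 := x - mu *: y; set e2 := y - nu *: z.
have E1 : inner e1 e1 = (1 - nc mu ^+ 2)%:C%C.
  rewrite /e1 innerBl !innerBr !innerZl !innerZr xx yy -[inner x y]inner_conj -/mu.
  rewrite rmorphB /= -normc_sqr; ring.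
have E2 : inner e2 e2 = (1 - nc nu ^+ 2)%:C%C.
  rewrite /e2 innerBl !innerBr !innerZl !innerZr zz yy -[inner y z]inner_conj -/nu.
  rewrite rmorphB /= -normc_sqr; ring.
have Ew : x - (mu * nu) *: z = e1 + mu *: e2.
  by rewrite /e1 /e2 scalerBr scalerA addrA subrK.
clearbody e1 e2. set t := inner e1 e2.
have W1 : inner (x - (mu * nu) *: z) (x - (mu * nu) *: z) =
    (1 - nc ka ^+ 2 + nc (mu * nu - ka) ^+ 2)%:C%C.
  rewrite innerBl !innerBr !innerZl !innerZr xx zz -[inner x z]inner_conj -/ka.
  rewrite rmorphD rmorphB /= -!normc_sqr !rmorphB !rmorphM /=; ring.
have W2 : inner (x - (mu * nu) *: z) (x - (mu * nu) *: z) =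
    (1 - nc mu ^+ 2 + 2 * complex.Re (mu * t) + nc mu ^+ 2 * (1 - nc nu ^+ 2))%:C%C.
  rewrite Ew innerDl !innerDr !innerZl !innerZr E1 E2 -[inner e2 e1]inner_conj -/t.
  rewrite [in X in _ = X]rmorphD [in X in _ = X]rmorphD /= -addJ realCM -normc_sqr rmorphM /=; ring.
have Ereal : 1 - nc ka ^+ 2 + nc (mu * nu - ka) ^+ 2 =
    1 - nc mu ^+ 2 + 2 * complex.Re (mu * t) + nc mu ^+ 2 * (1 - nc nu ^+ 2).
  by apply: complexI; rewrite -W1 -W2.
have HRe : complex.Re (mu * t) <= nc mu * nc t.
  by rewrite -normcM'; exact: Re_le_normc.
have HCS := CSr e1 e2; rewrite E1 E2 !ReC -/t in HCS.
have HA : 0 <= 1 - nc mu ^+ 2 by have := Nr_ge0 e1; rewrite E1 ReC.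
have HB : 0 <= 1 - nc nu ^+ 2 by have := Nr_ge0 e2; rewrite E2 ReC.
have Ha := normc_ge0 mu; have Hg := normc_ge0 t; have Hd := normc_ge0 (mu * nu - ka).
set a := nc mu in Ereal HRe HA Ha HCS; set b := nc nu in Ereal HB HCS.
set c := nc ka in Ereal *; set g := nc t in HRe Hg HCS.
set d := nc (mu * nu - ka) in Ereal Hd.
set sA := Num.sqrt (1 - a ^+ 2); set sB := Num.sqrt (1 - b ^+ 2).
have sA0 : 0 <= sA := sqrtr_ge0 _. have sB0 : 0 <= sB := sqrtr_ge0 _.
have sAE : sA ^+ 2 = 1 - a ^+ 2 by rewrite sqr_sqrtr.
have sBE : sB ^+ 2 = 1 - b ^+ 2 by rewrite sqr_sqrtr.
have gle : g <= sA * sB.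
  have p0 : 0 <= sA * sB by apply: mulr_ge0.
  have H : g ^+ 2 <= (sA * sB) ^+ 2 by rewrite exprMn sAE sBE.
  nra.
have a1 : a <= 1 by nra.
have h1 : a * g <= sA * sB.
  have : 0 <= (1 - a) * g by apply: mulr_ge0 => //; lra.
  rewrite mulrBl mul1r; lra.
have h2 : a ^+ 2 * (1 - b ^+ 2) <= 1 - b ^+ 2.
  have : 0 <= (1 - a ^+ 2) * (1 - b ^+ 2) by apply: mulr_ge0.
  rewrite mulrBl mul1r; lra.
have d2 : 0 <= d ^+ 2 := sqr_ge0 d.
have key : 1 - c ^+ 2 <= (sA + sB) ^+ 2.
  rewrite sqrrD sAE sBE; lra.
rewrite -[sA + sB]ger0_norm ?addr_ge0 // -sqrtr_sqr; exact: ler_wsqrtr.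
Qed.
End E.


Section F.
Variables (R : realType) (n : nat).
Local Open Scope classical_set_scope.
Local Notation C := R[i].
Local Notation nc := (@ComplexField.Normc.normc R).
Implicit Types (u v w x y z psi : 'cV[C]_n) (A B U V W X : 'M[C]_n).

Lemma uabs_inner U V psi : uabs U V psi = nc (inner (U *m psi) (V *m psi)).
Proof. by rewrite /uabs -mulmxA inner_adj adjmxK. Qed.

Lemma unitaryC U : unitary U -> U *m adjmx U = 1%:M.
Proof. exact: mulmx1C. Qed.

Lemma unitary_inner U x y : unitary U -> inner (U *m x) (U *m y) = inner x y.
Proof. by move=> HU; rewrite inner_adj mulmxA HU mul1mx. Qed.

Lemma elt_le1 (m : R) : Num.sqrt (1 - m ^+ 2) <= 1.
Proof. rewrite -[leRHS]sqrtr1; apply: ler_wsqrtr; have := sqr_ge0 m; lra. Qed.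

Lemma udist_lb U V psi : inner psi psi = 1 ->
  Num.sqrt (1 - uabs U V psi ^+ 2) <= udist U V.
Proof.
move=> H; apply: ub_le_sup; last by exists psi.
by exists 1 => r [phi [_ ->]]; exact: elt_le1.
Qed.

Lemma udist_ub U V (b : R) : 0 <= b ->
  (forall psi, inner psi psi = 1 -> Num.sqrt (1 - uabs U V psi ^+ 2) <= b) ->
  udist U V <= b.
Proof.
move=> b0 H; rewrite /udist.
have [[psi Hpsi]|ne] := pselect (exists psi : 'cV[C]_n, inner psi psi = 1).
  apply: ge_sup; first by exists (Num.sqrt (1 - uabs U V psi ^+ 2)); exists psi.
  by move=> r [phi [Hphi ->]]; exact: H.
rewrite (_ : [set r | _] = set0) ?sup0 //.
by apply/seteqP; split => r // [phi [Hphi _]]; apply: ne; exists phi.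
Qed.

Lemma udist_ge0 U V : 0 <= udist U V.
Proof.
have [[psi Hpsi]|ne] := pselect (exists psi : 'cV[C]_n, inner psi psi = 1).
  exact: le_trans (sqrtr_ge0 _) (udist_lb U V Hpsi).
rewrite /udist (_ : [set r | _] = set0) ?sup0 //.
by apply/seteqP; split => r // [phi [Hphi _]]; apply: ne; exists phi.
Qed.

Lemma udist_le1 U V : udist U V <= 1.
Proof. by apply: udist_ub => // psi _; exact: elt_le1. Qed.

Lemma normc_1 (c : C) : `|c| = 1 -> nc c = 1.
Proof. by move=> H; apply: complexI; rewrite -normC_normc H. Qed.

Lemma uabsZr U V c : `|c| = 1 -> uabs U (c *: V) = uabs U V.
Proof.
move=> Hc; apply: funext => psi.
by rewrite /uabs -scalemxAr -scalemxAl innerZr normcM' normc_1 // mul1r.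
Qed.

Lemma uabsZl U V c : `|c| = 1 -> uabs (c *: U) V = uabs U V.
Proof.
move=> Hc; apply: funext => psi.
by rewrite /uabs adjmxZ -!scalemxAl innerZr normcM' normcJ' normc_1 // mul1r.
Qed.

Lemma uabsC U V : uabs U V = uabs V U.
Proof. by apply: funext => psi; rewrite !uabs_inner -inner_conj normcJ'. Qed.

Lemma uabsXl U V X : unitary X -> uabs (X *m U) (X *m V) = uabs U V.
Proof.
by move=> HX; apply: funext => psi; rewrite !uabs_inner -!mulmxA unitary_inner.
Qed.

Lemma udistXr U V X : unitary X -> udist (U *m X) (V *m X) = udist U V.
Proof.
move=> HX; rewrite /udist; congr sup; apply/seteqP; split => r [psi [Hpsi ->]].
  exists (X *m psi); split; first by rewrite unitary_inner.
  by rewrite !uabs_inner !mulmxA.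
exists (adjmx X *m psi); split.
  by rewrite -inner_adj mulmxA unitaryC // mul1mx.
by rewrite !uabs_inner -!mulmxA (mulmxA X) unitaryC // mul1mx.
Qed.

Lemma udist_tri U V W : unitary U -> unitary V -> unitary W ->
  udist U W <= udist U V + udist V W.
Proof.
move=> HU HV HW; apply: udist_ub; first by rewrite addr_ge0 ?udist_ge0.
move=> psi Hpsi; apply: le_trans (lerD (udist_lb U V Hpsi) (udist_lb V W Hpsi)).
rewrite !uabs_inner; apply: sqrt_tri; by rewrite unitary_inner.
Qed.

End F.


Section G.
Variables (R : realType) (n : nat).
Local Open Scope classical_set_scope.
Local Notation C := R[i].
Local Notation nc := (@ComplexField.Normc.normc R).
Implicit Types (u v w x y z psi : 'cV[C]_n) (A B U V W X : 'M[C]_n).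

Lemma conjR (k : R) : ((k%:C)%C : C)^* = (k%:C)%C.
Proof. by apply/eqP; rewrite eq_complex /= oppr0 !eqxx. Qed.

Lemma eigen_all W : unitary W ->
  (forall psi, inner psi psi = 1 -> nc (inner psi (W *m psi)) = 1) ->
  forall v, exists mu, W *m v = mu *: v.
Proof.
move=> HW H.
have unitvec psi : inner psi psi = 1 -> W *m psi = inner psi (W *m psi) *: psi.
  move=> Hpsi; set mu := inner psi (W *m psi).
  have E : mu * mu^* = 1 by rewrite normc_sqr H // expr1n.
  apply/eqP; rewrite -subr_eq0; apply/eqP; apply: inner_self_eq0.
  rewrite innerBl !innerBr !innerZl !innerZr unitary_inner // Hpsi.
  rewrite -[inner (W *m psi) psi]inner_conj -/mu.
  transitivity (1 - mu * mu^*); first by ring.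
  by rewrite E subrr.
move=> v; have [->|v0] := eqVneq v 0; first by exists 0; rewrite mulmx0 scale0r.
set N := complex.Re (inner v v).
have N0 : 0 < N.
  rewrite lt_def Nr_ge0 andbT; apply/eqP => HN.
  by move: v0; rewrite (inner_self_eq0 (_ : inner v v = 0)) ?eqxx // inner_selfR -/N HN.
set r := Num.sqrt N.
have r0 : 0 < r by rewrite sqrtr_gt0.
set x := (r^-1)%:C%C *: v.
have Hx : inner x x = 1.
  rewrite innerZl innerZr inner_selfR -/N conjR -!rmorphM /=.
  by rewrite mulrA -expr2 exprVn sqr_sqrtr ?(ltW N0) // mulVf ?gt_eqF // rmorph1.
have Hv : v = r%:C%C *: x.
  by rewrite scalerA -rmorphM mulfV ?gt_eqF // rmorph1 scale1r.
clearbody x; move: (unitvec x Hx); set mu := inner x (W *m x) => Wx.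
exists mu; by rewrite Hv -scalemxAr Wx !scalerA mulrC.
Qed.

Lemma inner_delta (i : 'I_n) v : inner (delta_mx i 0) v = v i 0.
Proof.
rewrite /inner (bigD1 i) //= big1 => [|k kneq]; first by rewrite !mxE !eqxx conjC1 mul1r addr0.
by rewrite !mxE (negbTE kneq) /= conjC0 mul0r.
Qed.

Lemma udist0 U V : unitary U -> unitary V ->
  (udist U V = 0 <-> exists c : C, `|c| = 1 /\ U = c *: V).
Proof.
move=> HU HV; split; last first.
  move=> [c [Hc ->]]; apply/le_anti; rewrite udist_ge0 andbT.
  rewrite /udist uabsZl // -/(udist V V).
  apply: udist_ub => // psi Hpsi.
  by rewrite uabs_inner unitary_inner // Hpsi ComplexField.Normc.normc1 expr1n subrr sqrtr0.
move=> H0.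
set W := adjmx U *m V.
have HW : unitary W.
  by rewrite /unitary /W adjmxM adjmxK -mulmxA (mulmxA U) unitaryC // mul1mx.
have H1 psi : inner psi psi = 1 -> nc (inner psi (W *m psi)) = 1.
  move=> Hpsi; have := udist_lb U V Hpsi; rewrite H0 => Hle.
  have Hs : Num.sqrt (1 - uabs U V psi ^+ 2) = 0 by apply/le_anti; rewrite Hle sqrtr_ge0.
  move/eqP: Hs; rewrite sqrtr_eq0 /uabs -/W => Hm.
  have Hcs := CSr psi (W *m psi); rewrite unitary_inner // Hpsi /= mulr1 in Hcs.
  have := normc_ge0 (inner psi (W *m psi)).
  set m := nc _ in Hm Hcs * => m0.
  apply/eqP; rewrite -(sqrp_eq1 m0); apply/eqP; lra.
have Hall := eigen_all HW H1.
have WE : adjmx U *m V = W by [].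
clearbody W.
have [n0|npos] := posnP n.
  exists 1; split; first by rewrite normr1.
  by apply/matrixP => i; have := ltn_ord i; rewrite [in X in (_ < X)%N -> _]n0.
have Wcol i k : (W *m (delta_mx i 0 : 'cV[C]_n)) k 0 = W k i by rewrite -colE mxE.
have off k i : k != i -> W k i = 0.
  move=> ki; have [l Hl] := Hall (delta_mx i 0).
  by rewrite -Wcol Hl !mxE (negbTE ki) mulr0.
have diag i j : W i i = W j j.
  have [->//|ij] := eqVneq i j.
  have [l Hl] := Hall (delta_mx i 0 + delta_mx j 0).
  have Ei := congr1 (fun M : 'cV[C]_n => M i 0) Hl; have Ej := congr1 (fun M : 'cV[C]_n => M j 0) Hl.
  move: Ei Ej; rewrite /= mulmxDr -!colE !mxE.
  have ji : j != i by rewrite eq_sym.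
  rewrite (off _ _ ij) (off _ _ ji) addr0 add0r => -> ->.
  by rewrite !eqxx (negbTE ij) (negbTE ji) /= addrC.
set i0 := Ordinal npos; set l := W i0 i0.
have Wl : W = l%:M.
  apply/matrixP => k m; rewrite mxE; have [->|km] := eqVneq k m.
    by rewrite mulr1n /l (diag m i0).
  by rewrite mulr0n off.
have Vl : V = l *: U.
  by rewrite -[V]mul1mx -(unitaryC HU) -mulmxA WE Wl mul_mx_scalar.
have nl : nc l = 1.
  have := H1 (delta_mx i0 0); rewrite !inner_delta Wcol !mxE !eqxx.
  by apply.
exists l^*; split.
  by rewrite normC_normc normcJ' nl.
by rewrite Vl scalerA mulrC normc_sqr nl expr1n scale1r.
Qed.
End G.


Section H.
Variables (R : realType) (m : nat).
Local Open Scope classical_set_scope.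
Local Notation T := 'rV[R]_m.
Implicit Types f g : T -> R.

Lemma cC (c : R) : continuous (fun _ : T => c).
Proof. exact: cst_continuous. Qed.
Lemma cX j : continuous (fun v : T => v ord0 j).
Proof. exact: coord_continuous. Qed.
Lemma cD f g : continuous f -> continuous g -> continuous (fun v => f v + g v).
Proof. by move=> hf hg x; apply: continuousD; [exact: hf | exact: hg]. Qed.
Lemma cB f g : continuous f -> continuous g -> continuous (fun v => f v - g v).
Proof. by move=> hf hg x; apply: continuousB; [exact: hf | exact: hg]. Qed.
Lemma cM f g : continuous f -> continuous g -> continuous (fun v => f v * g v).
Proof. by move=> hf hg x; apply: continuousM; [exact: hf | exact: hg]. Qed.
Lemma cSum (I : finType) (F : I -> T -> R) : (forall i, continuous (F i)) ->
  continuous (fun v => \sum_i F i v).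
Proof.
move=> hF; rewrite unlock /reducebig.
elim: (index_enum I) => [|a s IH] /=; first exact: cC.
exact: cD.
Qed.
End H.

Section I.
Variables (R : realType) (n : nat).
Local Open Scope classical_set_scope.
Local Notation C := R[i].
Local Notation nc := (@ComplexField.Normc.normc R).
Local Notation T := 'rV[R]_(n + n).

Definition emb (v : T) : 'cV[C]_n :=
  \col_k (Complex (v ord0 (lshift n k)) (v ord0 (rshift n k))).
Definition rep (psi : 'cV[C]_n) : T :=
  row_mx (\row_k complex.Re (psi k ord0)) (\row_k complex.Im (psi k ord0)).

Lemma emb_rep psi : emb (rep psi) = psi.
Proof.
apply/matrixP => k j; rewrite (ord1 j) /emb /rep mxE row_mxEl row_mxEr !mxE.
by case: (psi k ord0).
Qed.

Definition gn (v : T) : R := \sum_j v ord0 j ^+ 2.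

Lemma conj_mul_self (a b : R) : (Complex a b : C)^* * Complex a b = (a ^+ 2 + b ^+ 2)%:C%C.
Proof. rewrite conjE; apply/eqP; rewrite eq_complex /=; apply/andP; split; apply/eqP; ring. Qed.

Lemma inner_emb v : inner (emb v) (emb v) = (gn v)%:C%C.
Proof.
rewrite /inner /gn big_split_ord /= -big_split /= rmorph_sum; apply: eq_bigr => k _.
by rewrite mxE conj_mul_self.
Qed.

Lemma Re_sum (I : Type) (s : seq I) (F : I -> C) :
  complex.Re (\sum_(i <- s) F i) = \sum_(i <- s) complex.Re (F i).
Proof. by apply: (big_morph (@complex.Re R)) => // -[a b] [c d]. Qed.
Lemma Im_sum (I : Type) (s : seq I) (F : I -> C) :
  complex.Im (\sum_(i <- s) F i) = \sum_(i <- s) complex.Im (F i).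
Proof. by apply: (big_morph (@complex.Im R)) => // -[a b] [c d]. Qed.

Lemma Re_term (a b c d : R) (w : C) :
  complex.Re ((Complex a b : C)^* * w * Complex c d) =
  (a * complex.Re w + b * complex.Im w) * c - (a * complex.Im w - b * complex.Re w) * d.
Proof. by case: w => p q; rewrite conjE /=; ring. Qed.
Lemma Im_term (a b c d : R) (w : C) :
  complex.Im ((Complex a b : C)^* * w * Complex c d) =
  (a * complex.Re w + b * complex.Im w) * d + (a * complex.Im w - b * complex.Re w) * c.
Proof. by case: w => p q; rewrite conjE /=; ring. Qed.

Lemma h_expand (W : 'M[C]_n) v : inner (emb v) (W *m emb v) =
  \sum_k \sum_l (emb v k ord0)^* * W k l * emb v l ord0.
Proof.
rewrite /inner; apply: eq_bigr => k _; rewrite [(W *m _) _ _]mxE mulr_sumr.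
by apply: eq_bigr => l _; rewrite mulrA.
Qed.

Definition reF (W : 'M[C]_n) (v : T) : R := \sum_k \sum_l
  ((v ord0 (lshift n k) * complex.Re (W k l) + v ord0 (rshift n k) * complex.Im (W k l)) * v ord0 (lshift n l)
  - (v ord0 (lshift n k) * complex.Im (W k l) - v ord0 (rshift n k) * complex.Re (W k l)) * v ord0 (rshift n l)).
Definition imF (W : 'M[C]_n) (v : T) : R := \sum_k \sum_l
  ((v ord0 (lshift n k) * complex.Re (W k l) + v ord0 (rshift n k) * complex.Im (W k l)) * v ord0 (rshift n l)
  + (v ord0 (lshift n k) * complex.Im (W k l) - v ord0 (rshift n k) * complex.Re (W k l)) * v ord0 (lshift n l)).

Lemma Re_h W v : complex.Re (inner (emb v) (W *m emb v)) = reF W v.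
Proof.
rewrite h_expand Re_sum; apply: eq_bigr => k _; rewrite Re_sum; apply: eq_bigr => l _.
by rewrite !mxE Re_term.
Qed.
Lemma Im_h W v : complex.Im (inner (emb v) (W *m emb v)) = imF W v.
Proof.
rewrite h_expand Im_sum; apply: eq_bigr => k _; rewrite Im_sum; apply: eq_bigr => l _.
by rewrite !mxE Im_term.
Qed.

Lemma cN' (f : 'rV[R]_(n + n) -> R) : continuous f -> continuous (fun v => - f v).
Proof. by move=> hf x; apply: continuousN; exact: hf. Qed.
Ltac solc := repeat first [exact: cX | exact: cC | apply: cB | apply: cD | apply: cM | apply: cN'].

Lemma reF_cont W : continuous (reF W).
Proof. apply: cSum => k; apply: cSum => l; solc. Qed.
Lemma imF_cont W : continuous (imF W).
Proof. apply: cSum => k; apply: cSum => l; solc. Qed.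
Lemma gn_cont : continuous gn.
Proof. apply: cSum => k; rewrite /=; under eq_fun do rewrite expr2; solc. Qed.

Lemma normc_ReIm (z : C) : nc z = Num.sqrt (complex.Re z ^+ 2 + complex.Im z ^+ 2).
Proof. by case: z. Qed.

Lemma min_exists (U V : 'M[C]_n) : (0 < n)%N ->
  exists2 psi0, inner psi0 psi0 = 1 &
    forall psi, inner psi psi = 1 -> uabs U V psi0 <= uabs U V psi.
Proof.
move=> npos.
set W := adjmx U *m V.
set F := fun v : T => reF W v ^+ 2 + imF W v ^+ 2.
have Fc : continuous F.
  rewrite /F; under eq_fun do rewrite !expr2.
  by apply: cD; apply: cM; first [exact: reF_cont | exact: imF_cont].
have uF v : uabs U V (emb v) = Num.sqrt (F v).
  by rewrite /uabs -/W normc_ReIm Re_h Im_h.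
pose K := [set v : T | forall i, `[-1, 1]%classic (v ord0 i)].
have Kc : compact K.
  have := @rV_compact R (n + n) (fun=> `[-1, 1]%classic). move=> H; apply: H => i; exact: segment_compact.
pose S := [set v : T | gn v = 1].
have Sc : closed S.
  have := (continuous_closedP gn).1 gn_cont [set x : R | x = 1]; apply; exact: closed_eq.
have Ac : compact (K `&` S) by exact: compact_closedI.
have rep_in psi : inner psi psi = 1 -> (K `&` S) (rep psi).
  move=> Hpsi.
  have g1 : gn (rep psi) = 1.
    by apply: complexI; rewrite -inner_emb emb_rep Hpsi.
  split => // i; rewrite /= in_itv /=.
  have : rep psi ord0 i ^+ 2 <= 1.
    rewrite -g1 /gn (bigD1 i) //= lerDl; apply: sumr_ge0 => j _; exact: sqr_ge0.
  move=> H; apply/andP; split; nra.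
have ne : (K `&` S) !=set0.
  exists (rep (delta_mx (Ordinal npos) 0)); apply: rep_in.
  by rewrite inner_delta mxE !eqxx.
have Fw : {within K `&` S, continuous F} by apply: continuous_subspaceT.
have [c cA cmin] := compact_EVT_min ne Ac Fw.
have cA' : (K `&` S) c by rewrite inE in cA.
exists (emb c).
  by rewrite inner_emb (proj2 cA').
move=> psi Hpsi; rewrite -(emb_rep psi) !uF; apply: ler_wsqrtr.
by apply: cmin; rewrite inE; exact: rep_in.
Qed.
End I.


Section J.
Variables (R : realType) (n : nat).
Local Open Scope classical_set_scope.
Local Notation C := R[i].
Local Notation nc := (@ComplexField.Normc.normc R).

Lemma udist1 (U V : 'M[C]_n) : unitary U -> unitary V ->
  (udist U V = 1 <-> exists alpha : 'cV[C]_n,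
       inner alpha alpha = 1 /\ inner (U *m alpha) (V *m alpha) = 0).
Proof.
move=> HU HV; split; last first.
  move=> [a [Ha H0]]; apply/le_anti; rewrite udist_le1 /=.
  have := udist_lb U V Ha.
  by rewrite uabs_inner H0 ComplexField.Normc.normc0 expr0n /= subr0 sqrtr1.
move=> H1.
have [n0|npos] := posnP n.
  have : udist U V <= 0.
    apply: udist_ub => // psi Hpsi; exfalso.
    have : inner psi psi = 0.
      rewrite /inner big1 // => i _; have := ltn_ord i.
      by rewrite [in X in (_ < X)%N -> _]n0.
    by rewrite Hpsi => /eqP; rewrite oner_eq0.
  rewrite H1; lra.
have [psi0 H0 Hmin] := min_exists U V npos.
exists psi0; split => //.
have m00 : 0 <= uabs U V psi0 by exact: normc_ge0.
have : udist U V <= Num.sqrt (1 - uabs U V psi0 ^+ 2).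
  apply: udist_ub => [|psi Hpsi]; first exact: sqrtr_ge0.
  apply: ler_wsqrtr; have := Hmin psi Hpsi; nra.
set m0 := uabs U V psi0 in m00 *.
rewrite H1 => Hs.
have Hm : m0 = 0.
  have [x0|x0] := leP (1 - m0 ^+ 2) 0.
    by have := x0; rewrite -sqrtr_eq0 => /eqP E; rewrite E in Hs; lra.
  move: Hs; rewrite -[X in X <= _]sqrtr1 ler_sqrt; last exact: ltW.
  move=> H; apply/le_anti; rewrite m00 andbT; nra.
move: Hm; rewrite /m0 uabs_inner.
exact: ComplexField.Normc.eq0_normc.
Qed.
End J.

Theorem theorem3 (R : realType) (n : nat) (U V W : 'M[R[i]]_n) :
  unitary U -> unitary V -> unitary W ->
  (forall c : R[i], `|c| = 1 ->
     udist U (c *: V) = udist U V /\ udist (c *: U) V = udist U V) /\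
  (0 <= udist U V /\ udist U V <= 1) /\
  (udist U V = 0 <-> exists c : R[i], `|c| = 1 /\ U = c *: V) /\
  udist U V = udist V U /\
  udist U W <= udist U V + udist V W /\
  (forall X : 'M[R[i]]_n, unitary X ->
     udist (X *m U) (X *m V) = udist U V /\ udist (U *m X) (V *m X) = udist U V) /\
  (udist U V = 1 <->
     exists alpha : 'cV[R[i]]_n,
       inner alpha alpha = 1 /\ inner (U *m alpha) (V *m alpha) = 0).
Proof.
move=> HU HV HW.
split.
  by move=> c Hc; split; rewrite /udist ?uabsZr ?uabsZl.
split; first by split; [exact: udist_ge0 | exact: udist_le1].
split; first exact: udist0.
split; first by rewrite /udist uabsC.
split; first exact: udist_tri.
split; last exact: udist1.
move=> X HX; split; last exact: udistXr.
by rewrite /udist uabsXl.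
Qed.
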